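(* Let $\Omega\subset\mathbb{R}^3$ be a connected bounded open set with $C^2$ boundary and let $0<d<\min\{1,\delta\}$, where $\delta=\delta(\Omega)$ is as in the context. Then $\Omega\setminus\Omega_{d/8}$ is pathwise connected: for any $x'_1,x'_2\in\Omega\setminus\Omega_{d/8}$ there is a continuous curve in $\Omega\setminus\Omega_{d/8}$ joining $x'_1$ and $x'_2$.
   Context: $\Omega_\epsilon:=\{x\in\Omega:d(x,\partial\Omega)<\epsilon\}$. $\delta(\Omega)>0$ is a number such that for each $0<d<\min\{1,\delta\}$ there are $x_1^0,\dots,x_{m_1}^0\in\partial\Omega$ with $\partial\Omega\subset\bigcup_iB(x_i^0,d/8)$ and, for each $i$, an orthonormal basis $\{e_i^1,e_i^2,-n(x_i^0)\}$ ($n$ the outward unit normal) and a $C^2$ function $\phi_i:\mathbb{R}^2\to\mathbb{R}$, $\phi_i(0)=0$, $\nabla\phi_i(0)=0$, $|\nabla\phi_i|<\frac1{100}$, such that inside $B(x_i^0,3d)$ (open and closed) $\partial\Omega$ is the graph $\{x_i^0+u_1e_i^1+u_2e_i^2-\phi_i(u_1,u_2)n(x_i^0)\}$ and $\Omega$ is the region $u_3>\phi_i(u_1,u_2)$ in coordinates $x_i^0+u_1e_i^1+u_2e_i^2-u_3n(x_i^0)$, and $B(x_i^0-\frac d2n(x_i^0),\frac d2)\subset B(x_i^0,d)\cap\Omega$. *)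

(* Defs.v *)
From Stdlib Require Import Reals Lra.
From Coquelicot Require Import Coquelicot.
Open Scope R_scope.

Record vec3 := mk3 { c1 : R; c2 : R; c3 : R }.

Definition vadd (u v : vec3) : vec3 := mk3 (c1 u + c1 v) (c2 u + c2 v) (c3 u + c3 v).
Definition vscal (a : R) (u : vec3) : vec3 := mk3 (a * c1 u) (a * c2 u) (a * c3 u).
Definition vopp (u : vec3) : vec3 := vscal (-1) u.
Definition vsub (u v : vec3) : vec3 := vadd u (vopp v).
Definition vdot (u v : vec3) : R := c1 u * c1 v + c2 u * c2 v + c3 u * c3 v.
Definition vnorm (u : vec3) : R := sqrt (vdot u u).
Definition vdist (x y : vec3) : R := vnorm (vsub x y).

Definition set3 := vec3 -> Prop.

Definition oball (c : vec3) (r : R) : set3 := fun x => vdist x c < r.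
Definition cball (c : vec3) (r : R) : set3 := fun x => vdist x c <= r.

Definition open3 (A : set3) : Prop :=
  forall x, A x -> exists r, 0 < r /\ forall y, vdist y x < r -> A y.

Definition bounded3 (A : set3) : Prop :=
  exists M, forall x, A x -> vnorm x <= M.

Definition connected3 (A : set3) : Prop :=
  ~ (exists U V : set3, open3 U /\ open3 V /\
       (forall x, A x -> U x \/ V x) /\
       (exists x, A x /\ U x) /\ (exists x, A x /\ V x) /\
       (forall x, A x -> U x -> V x -> False)).

Definition bdry (A : set3) : set3 := fun x =>
  forall r, 0 < r ->
    (exists y, A y /\ vdist x y < r) /\ (exists y, ~ A y /\ vdist x y < r).

(** Omega_eps = { x in Omega : d(x, dOmega) < eps };
    d(x,dOmega) = inf_{y in dOmega} |x-y| < eps  iff  some y in dOmega has |x-y| < eps *)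
Definition near_bdry (Om : set3) (eps : R) : set3 := fun x =>
  Om x /\ exists y, bdry Om y /\ vdist x y < eps.

Definition D1 (f : R -> R -> R) : R -> R -> R := fun x y => Derive (fun t => f t y) x.
Definition D2 (f : R -> R -> R) : R -> R -> R := fun x y => Derive (fun t => f x t) y.

Definition cont2 (g : R -> R -> R) : Prop :=
  forall x y eps, 0 < eps -> exists eta, 0 < eta /\
    forall x' y', Rabs (x' - x) < eta -> Rabs (y' - y) < eta ->
      Rabs (g x' y' - g x y) < eps.

Definition has_partials (f : R -> R -> R) : Prop :=
  forall x y, ex_derive (fun t => f t y) x /\ ex_derive (fun t => f x t) y.

Definition C1_2 (f : R -> R -> R) : Prop :=
  cont2 f /\ has_partials f /\ cont2 (D1 f) /\ cont2 (D2 f).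

Definition C2_2 (f : R -> R -> R) : Prop :=
  C1_2 f /\ C1_2 (D1 f) /\ C1_2 (D2 f).

Definition orthonormal3 (a b c : vec3) : Prop :=
  vdot a a = 1 /\ vdot b b = 1 /\ vdot c c = 1 /\
  vdot a b = 0 /\ vdot a c = 0 /\ vdot b c = 0.

Definition lpt (x0 e1 e2 nu : vec3) (u1 u2 u3 : R) : vec3 :=
  vadd x0 (vadd (vscal u1 e1) (vadd (vscal u2 e2) (vscal (- u3) nu))).

Definition graph_in (Om : set3) (B : set3) (x0 e1 e2 nu : vec3)
    (phi : R -> R -> R) : Prop :=
  (forall x, B x ->
     (bdry Om x <-> exists u1 u2, x = lpt x0 e1 e2 nu u1 u2 (phi u1 u2))) /\
  (forall x, B x ->
     (Om x <-> exists u1 u2 u3, x = lpt x0 e1 e2 nu u1 u2 u3 /\ phi u1 u2 < u3)).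

Definition C2_boundary (Om : set3) : Prop :=
  forall x0, bdry Om x0 ->
    exists r (e1 e2 nu : vec3) (phi : R -> R -> R),
      0 < r /\ orthonormal3 e1 e2 (vopp nu) /\ C2_2 phi /\
      graph_in Om (oball x0 r) x0 e1 e2 nu phi.

(** The covering property defining delta(Omega), for a given d.
    nu i plays the role of the outward unit normal n(x_i^0). *)
Definition local_chart_cover (Om : set3) (d : R) : Prop :=
  exists (m1 : nat) (x0 e1 e2 nu : nat -> vec3) (phi : nat -> R -> R -> R),
    (forall i, (i < m1)%nat -> bdry Om (x0 i)) /\
    (forall y, bdry Om y -> exists i, (i < m1)%nat /\ oball (x0 i) (d / 8) y) /\
    (forall i, (i < m1)%nat ->
       orthonormal3 (e1 i) (e2 i) (vopp (nu i)) /\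
       C2_2 (phi i) /\
       phi i 0 0 = 0 /\ D1 (phi i) 0 0 = 0 /\ D2 (phi i) 0 0 = 0 /\
       (forall u1 u2, sqrt (D1 (phi i) u1 u2 ^ 2 + D2 (phi i) u1 u2 ^ 2) < 1 / 100) /\
       graph_in Om (oball (x0 i) (3 * d)) (x0 i) (e1 i) (e2 i) (nu i) (phi i) /\
       graph_in Om (cball (x0 i) (3 * d)) (x0 i) (e1 i) (e2 i) (nu i) (phi i) /\
       (forall x, oball (vsub (x0 i) (vscal (d / 2) (nu i))) (d / 2) x ->
          oball (x0 i) d x /\ Om x)).

Definition is_delta (Om : set3) (delta : R) : Prop :=
  0 < delta /\ forall d, 0 < d -> d < Rmin 1 delta -> local_chart_cover Om d.

Definition cont_curve (g : R -> vec3) : Prop :=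
  forall t, 0 <= t <= 1 -> forall eps, 0 < eps -> exists eta, 0 < eta /\
    forall s, 0 <= s <= 1 -> Rabs (s - t) < eta -> vdist (g s) (g t) < eps.

Definition path_connected (A : set3) : Prop :=
  forall x1 x2, A x1 -> A x2 ->
    exists g : R -> vec3, cont_curve g /\ g 0 = x1 /\ g 1 = x2 /\
      (forall t, 0 <= t <= 1 -> A (g t)).

(* Main.v *)
Require Import Defs.
From Stdlib Require Import Reals Lra Classical.
From Coquelicot Require Import Coquelicot.
Open Scope R_scope.

Definition seg (p q : vec3) (l : R) : vec3 := vadd p (vscal l (vsub q p)).

Ltac vcomp := repeat match goal with v : vec3 |- _ => destruct v end;
  unfold seg, lpt, vsub, vopp, vadd, vscal, vdot in *; simpl in *.


Lemma vdot_nonneg u : 0 <= vdot u u.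
Proof. destruct u; unfold vdot; simpl; nra. Qed.

Lemma sqrt_lt_iff X r : 0 <= X -> 0 < r -> (sqrt X < r <-> X < r * r).
Proof.
  intros HX Hr. pose proof (sqrt_sqrt X HX). pose proof (sqrt_pos X).
  split; intro H1; [nra|]. destruct (Rlt_or_le (sqrt X) r); [auto| nra].
Qed.

Lemma vdist_lt x y r : 0 < r -> (vdist x y < r <-> vdot (vsub x y) (vsub x y) < r * r).
Proof. intro Hr. apply sqrt_lt_iff; auto using vdot_nonneg. Qed.

Lemma vdist_pos x y : 0 <= vdist x y.
Proof. apply sqrt_pos. Qed.

Lemma vdist_sym x y : vdist x y = vdist y x.
Proof. unfold vdist, vnorm; f_equal; vcomp; ring. Qed.

Lemma vdist_refl x : vdist x x = 0.
Proof. unfold vdist, vnorm. replace (vdot (vsub x x) (vsub x x)) with 0 by (vcomp; ring). apply sqrt_0. Qed.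

Lemma CS3 a b : vdot a b * vdot a b <= vdot a a * vdot b b.
Proof.
  destruct a as [a1 a2 a3], b as [b1 b2 b3]; unfold vdot; simpl.
  assert (E: (a1*a1+a2*a2+a3*a3)*(b1*b1+b2*b2+b3*b3) - (a1*b1+a2*b2+a3*b3)*(a1*b1+a2*b2+a3*b3)
    = (a1*b2-a2*b1)^2 + (a1*b3-a3*b1)^2 + (a2*b3-a3*b2)^2) by ring.
  pose proof (pow2_ge_0 (a1*b2-a2*b1)). pose proof (pow2_ge_0 (a1*b3-a3*b1)). pose proof (pow2_ge_0 (a2*b3-a3*b2)).
  lra.
Qed.

Lemma vdist_triang x y z : vdist x z <= vdist x y + vdist y z.
Proof.
  unfold vdist, vnorm.
  set (a := vsub x y). set (b := vsub y z).
  replace (vsub x z) with (vadd a b) by (subst a b; vcomp; f_equal; ring).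
  assert (Hab: vdot (vadd a b) (vadd a b) = vdot a a + vdot b b + 2 * vdot a b)
    by (vcomp; ring).
  assert (CS: vdot a b * vdot a b <= vdot a a * vdot b b) by apply CS3.
  pose proof (vdot_nonneg a). pose proof (vdot_nonneg b). pose proof (vdot_nonneg (vadd a b)).
  pose proof (sqrt_sqrt _ H). pose proof (sqrt_sqrt _ H0). pose proof (sqrt_sqrt _ H1).
  pose proof (sqrt_pos (vdot a a)). pose proof (sqrt_pos (vdot b b)). pose proof (sqrt_pos (vdot (vadd a b) (vadd a b))).
  assert (vdot a b <= sqrt (vdot a a) * sqrt (vdot b b)).
  { set (sa := sqrt (vdot a a)) in *. set (sb := sqrt (vdot b b)) in *.
    destruct (Rle_or_lt (vdot a b) (sa * sb)); auto. exfalso.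
    assert (0 <= sa * sb) by nra.
    assert (vdot a b * vdot a b > (sa * sb) * (sa * sb)) by nra.
    assert ((sa*sb)*(sa*sb) = vdot a a * vdot b b) by (rewrite <- H2, <- H3 at 1; ring).
    lra. }
  destruct (Rle_or_lt (sqrt (vdot (vadd a b) (vadd a b))) (sqrt (vdot a a) + sqrt (vdot b b))); auto.
  exfalso.
  assert (sqrt (vdot (vadd a b) (vadd a b)) * sqrt (vdot (vadd a b) (vadd a b)) > (sqrt (vdot a a) + sqrt (vdot b b)) * (sqrt (vdot a a) + sqrt (vdot b b))) by nra.
  nra.
Qed.


Lemma seg_dist p q a b : vdist (seg p q a) (seg p q b) = Rabs (a - b) * vdist q p.
Proof.
  unfold vdist, vnorm.
  replace (vdot (vsub (seg p q a) (seg p q b)) (vsub (seg p q a) (seg p q b)))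
    with ((a - b) * (a - b) * vdot (vsub q p) (vsub q p)) by (unfold seg; vcomp; ring).
  rewrite sqrt_mult_alt by (apply Rle_0_sqr). f_equal.
  rewrite <- sqrt_Rsqr_abs. reflexivity.
Qed.

Lemma seg0 p q : seg p q 0 = p.
Proof. unfold seg; vcomp; f_equal; ring. Qed.
Lemma seg1 p q : seg p q 1 = q.
Proof. unfold seg; vcomp; f_equal; ring. Qed.


Definition path (A : set3) a b := exists g : R -> vec3, cont_curve g /\ g 0 = a /\ g 1 = b /\
  forall t, 0 <= t <= 1 -> A (g t).

Lemma path_refl A a : A a -> path A a a.
Proof.
  intro Ha. exists (fun _ => a). repeat split; auto.
  intros t Ht eps He. exists 1. split; [lra|]. intros. rewrite vdist_refl; auto.
Qed.

Lemma path_sym A a b : path A a b -> path A b a.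
Proof.
  intros [g [Hc [H0 [H1 HA]]]]. exists (fun t => g (1 - t)).
  repeat split.
  - intros t Ht eps He. destruct (Hc (1 - t) ltac:(lra) eps He) as [eta [Heta Hs]].
    exists eta; split; auto. intros s Hs1 Hs2. apply Hs; [lra|].
    replace (1 - s - (1 - t)) with (- (s - t)) by ring. rewrite Rabs_Ropp; auto.
  - replace (1 - 0) with 1 by ring; auto.
  - replace (1 - 1) with 0 by ring; auto.
  - intros t Ht. apply HA; lra.
Qed.

Lemma path_trans A a b c : path A a b -> path A b c -> path A a c.
Proof.
  intros [g1 [Hc1 [H10 [H11 HA1]]]] [g2 [Hc2 [H20 [H21 HA2]]]].
  exists (fun t => if Rle_dec t (1/2) then g1 (2 * t) else g2 (2 * t - 1)).
  repeat split.
  - intros t Ht eps He.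
    destruct (Rlt_le_dec t (1/2)) as [Hlt|Hge].
    + destruct (Hc1 (2 * t) ltac:(lra) eps He) as [eta [Heta Hs]].
      exists (Rmin (eta / 2) (1/2 - t)). split.
      { apply Rmin_glb_lt; lra. }
      intros s Hs1 Hs2. pose proof (Rmin_l (eta/2) (1/2 - t)). pose proof (Rmin_r (eta/2) (1/2 - t)).
      pose proof (Rabs_def2 _ _ Hs2) as Habs.
      destruct (Rle_dec s (1/2)); [|lra]. destruct (Rle_dec t (1/2)); [|lra].
      apply Hs; [lra|]. apply Rabs_def1; lra.
    + destruct (Req_dec t (1/2)) as [Ht2|Ht2].
      * subst t. destruct (Hc1 1 ltac:(lra) eps He) as [eta1 [Heta1 Hs1]].
        destruct (Hc2 0 ltac:(lra) eps He) as [eta2 [Heta2 Hs2]].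
        exists (Rmin eta1 eta2 / 2). split.
        { assert (0 < Rmin eta1 eta2) by (apply Rmin_glb_lt; auto). lra. }
        intros s Hs Hst. pose proof (Rmin_l eta1 eta2). pose proof (Rmin_r eta1 eta2).
        pose proof (Rabs_def2 _ _ Hst) as Habs.
        destruct (Rle_dec (1/2) (1/2)); [|lra].
        replace (2 * (1/2)) with 1 by field.
        destruct (Rle_dec s (1/2)).
        -- apply Hs1; [lra|]. apply Rabs_def1; lra.
        -- rewrite H11, <- H20. apply Hs2; [lra|]. apply Rabs_def1; lra.
      * assert (Hgt: 1/2 < t) by lra.
        destruct (Hc2 (2 * t - 1) ltac:(lra) eps He) as [eta [Heta Hs]].
        exists (Rmin (eta / 2) (t - 1/2)). split.
        { apply Rmin_glb_lt; lra. }
        intros s Hs1 Hs2. pose proof (Rmin_l (eta/2) (t - 1/2)). pose proof (Rmin_r (eta/2) (t - 1/2)).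
        pose proof (Rabs_def2 _ _ Hs2) as Habs.
        destruct (Rle_dec s (1/2)); [lra|]. destruct (Rle_dec t (1/2)); [lra|].
        apply Hs; [lra|]. apply Rabs_def1; lra.
  - destruct (Rle_dec 0 (1/2)); [|lra]. rewrite Rmult_0_r; auto.
  - destruct (Rle_dec 1 (1/2)); [lra|]. replace (2 * 1 - 1) with 1 by ring; auto.
  - intros t Ht. destruct (Rle_dec t (1/2)); [apply HA1 | apply HA2]; lra.
Qed.

Lemma path_seg A p q : (forall l, 0 <= l <= 1 -> A (seg p q l)) -> path A p q.
Proof.
  intro HA. exists (seg p q). repeat split; auto using seg0, seg1.
  intros t Ht eps He. exists (eps / (vdist q p + 1)). split.
  { pose proof (vdist_pos q p). apply Rdiv_lt_0_compat; lra. }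
  intros s Hs Hst. rewrite seg_dist. pose proof (vdist_pos q p).
  apply Rlt_le_trans with (eps / (vdist q p + 1) * (vdist q p + 1)).
  - apply Rle_lt_trans with (Rabs (s - t) * (vdist q p + 1)).
    + pose proof (Rabs_pos (s - t)). nra.
    + apply Rmult_lt_compat_r; lra.
  - right. field. lra.
Qed.


Lemma seg_bdry (A : set3) p q : A p -> ~ A q -> exists l, 0 <= l <= 1 /\ bdry A (seg p q l).
Proof.
  intros Hp Hq.
  set (E := fun l => 0 <= l <= 1 /\ forall m, 0 <= m <= l -> A (seg p q m)).
  assert (HE0 : E 0).
  { split; [lra|]. intros m Hm. replace m with 0 by lra. rewrite seg0; auto. }
  assert (Hb : bound E) by (exists 1; intros x [Hx _]; lra).
  destruct (completeness E Hb (ex_intro _ 0 HE0)) as [m [Hub Hlub]].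
  assert (Hm0 : 0 <= m) by (apply Hub; auto).
  assert (Hm1 : m <= 1) by (apply Hlub; intros x [Hx _]; lra).
  assert (Happ : forall del, 0 < del -> exists e, E e /\ m - del < e).
  { intros del Hd. destruct (classic (exists e, E e /\ m - del < e)) as [H|H]; auto.
    exfalso. assert (m <= m - del); [|lra]. apply Hlub. intros x Hx.
    destruct (Rle_or_lt x (m - del)); auto. exfalso; apply H; eauto. }
  assert (Hbelow : forall mu, 0 <= mu < m -> A (seg p q mu)).
  { intros mu Hmu. destruct (Happ (m - mu) ltac:(lra)) as [e [[He1 He2] He3]].
    apply He2; lra. }
  pose proof (vdist_pos q p) as HN.
  exists m. split; [lra|]. intros r Hr. split.
  - destruct (Happ (r / (vdist q p + 1))) as [e [[He1 He2] He3]].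
    { apply Rdiv_lt_0_compat; lra. }
    assert (e <= m) by (apply Hub; split; auto).
    exists (seg p q e). split; [apply He2; lra|].
    rewrite seg_dist. rewrite Rabs_right by lra.
    apply Rle_lt_trans with ((r / (vdist q p + 1)) * vdist q p).
    + apply Rmult_le_compat_r; lra.
    + apply Rlt_le_trans with ((r / (vdist q p + 1)) * (vdist q p + 1)).
      * apply Rmult_lt_compat_l; [apply Rdiv_lt_0_compat|]; lra.
      * right; field; lra.
  - destruct (classic (exists y, ~ A y /\ vdist (seg p q m) y < r)) as [H|H]; auto.
    exfalso.
    assert (Hall : forall y, vdist (seg p q m) y < r -> A y).
    { intros y Hy. destruct (classic (A y)); auto. exfalso; apply H; eauto. }
    destruct (Req_dec m 1) as [Hm|Hm].
    + apply Hq. apply Hall. rewrite Hm, seg1, vdist_refl. auto.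
    + set (del := r / (2 * (vdist q p + 1))).
      assert (Hdel : 0 < del) by (apply Rdiv_lt_0_compat; lra).
      set (m' := Rmin 1 (m + del)).
      assert (Hm' : E m').
      { split. { unfold m'; unfold Rmin; destruct Rle_dec; lra. }
        intros mu Hmu. destruct (Rlt_or_le mu m).
        - apply Hbelow; lra.
        - apply Hall. rewrite seg_dist. rewrite Rabs_left1 by lra.
          assert (mu <= m + del) by (pose proof (Rmin_r 1 (m + del)); fold m' in H1; lra).
          apply Rle_lt_trans with (del * vdist q p).
          + apply Rmult_le_compat_r; lra.
          + unfold del. apply Rlt_le_trans with (r / (2 * (vdist q p + 1)) * (2 * (vdist q p + 1))).
            * apply Rmult_lt_compat_l; [apply Rdiv_lt_0_compat|]; lra.
            * right; field; lra. }
      assert (m' <= m) by (apply Hub; auto).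
      unfold m', Rmin in H0; destruct Rle_dec in H0; lra.
Qed.



Definition ChartOK (Om : set3) (d : R) x0 e1 e2 nu (phi : R -> R -> R) :=
  orthonormal3 e1 e2 (vopp nu) /\
  (forall a1 a2 b1 b2, Rabs (phi a1 a2 - phi b1 b2) <= (Rabs (a1 - b1) + Rabs (a2 - b2)) / 100) /\
  phi 0 0 = 0 /\ graph_in Om (oball x0 (3 * d)) x0 e1 e2 nu phi.

Definition Kset (Om : set3) (d : R) : set3 := fun x => Om x /\ ~ near_bdry Om (d / 8) x.

Lemma K_far Om d x b : Kset Om d x -> bdry Om b -> d / 8 <= vdist x b.
Proof.
  intros [Hx Hn] Hb. destruct (Rlt_or_le (vdist x b) (d/8)); auto.
  exfalso. apply Hn. split; eauto.
Qed.

Lemma lpt_sub x0 e1 e2 nu a1 a2 a3 b1 b2 b3 :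
  vsub (lpt x0 e1 e2 nu a1 a2 a3) (lpt x0 e1 e2 nu b1 b2 b3) =
  vadd (vscal (a1 - b1) e1) (vadd (vscal (a2 - b2) e2) (vscal (a3 - b3) (vopp nu))).
Proof. vcomp; f_equal; ring. Qed.

Lemma vdot_comb a b c u v w :
  vdot (vadd (vscal a u) (vadd (vscal b v) (vscal c w))) (vadd (vscal a u) (vadd (vscal b v) (vscal c w)))
  = a*a*vdot u u + b*b*vdot v v + c*c*vdot w w + 2*a*b*vdot u v + 2*a*c*vdot u w + 2*b*c*vdot v w.
Proof. vcomp; ring. Qed.

Lemma lpt_dd x0 e1 e2 nu a1 a2 a3 b1 b2 b3 : orthonormal3 e1 e2 (vopp nu) ->
  vdot (vsub (lpt x0 e1 e2 nu a1 a2 a3) (lpt x0 e1 e2 nu b1 b2 b3))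
       (vsub (lpt x0 e1 e2 nu a1 a2 a3) (lpt x0 e1 e2 nu b1 b2 b3))
  = (a1 - b1)^2 + (a2 - b2)^2 + (a3 - b3)^2.
Proof.
  intros [h1 [h2 [h3 [h4 [h5 h6]]]]]. rewrite lpt_sub, vdot_comb.
  rewrite h1, h2, h3, h4, h5, h6. ring.
Qed.

Lemma lpt000 x0 e1 e2 nu : lpt x0 e1 e2 nu 0 0 0 = x0.
Proof. vcomp; f_equal; ring. Qed.

Lemma lpt_dd0 x0 e1 e2 nu a1 a2 a3 : orthonormal3 e1 e2 (vopp nu) ->
  vdot (vsub (lpt x0 e1 e2 nu a1 a2 a3) x0) (vsub (lpt x0 e1 e2 nu a1 a2 a3) x0)
  = a1^2 + a2^2 + a3^2.
Proof.
  intro H. rewrite <- (lpt000 x0 e1 e2 nu) at 2 4. rewrite lpt_dd; auto. ring.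
Qed.

Lemma sq_lt_abs x r : 0 < r -> x^2 < r * r -> Rabs x < r.
Proof.
  intros Hr H. destruct (Rlt_or_le (Rabs x) r); auto. exfalso.
  pose proof (pow2_abs x).
  nra.
Qed.

Lemma vdist_lpt0 x0 e1 e2 nu a1 a2 a3 r : orthonormal3 e1 e2 (vopp nu) -> 0 < r ->
  (vdist (lpt x0 e1 e2 nu a1 a2 a3) x0 < r <-> a1^2 + a2^2 + a3^2 < r * r).
Proof. intros Ho Hr. rewrite vdist_lt by auto. rewrite lpt_dd0 by auto. tauto. Qed.

Lemma vdist_lpt x0 e1 e2 nu a1 a2 a3 b1 b2 b3 r : orthonormal3 e1 e2 (vopp nu) -> 0 < r ->
  (vdist (lpt x0 e1 e2 nu a1 a2 a3) (lpt x0 e1 e2 nu b1 b2 b3) < r <->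
   (a1 - b1)^2 + (a2 - b2)^2 + (a3 - b3)^2 < r * r).
Proof. intros Ho Hr. rewrite vdist_lt by auto. rewrite lpt_dd by auto. tauto. Qed.



Lemma abs_lt_sq x r : Rabs x < r -> x^2 < r * r.
Proof. intro H. pose proof (pow2_abs x). pose proof (Rabs_pos x). nra. Qed.

Lemma abs_sub_le a b : Rabs (a - b) <= Rabs a + Rabs b.
Proof. unfold Rminus. eapply Rle_trans; [apply Rabs_triang|]. rewrite Rabs_Ropp. lra. Qed.

Lemma GL Om d x0 e1 e2 nu phi u1 u2 s : ChartOK Om d x0 e1 e2 nu phi -> 0 < d ->
  u1^2 + u2^2 + s^2 < (2*d) * (2*d) -> s - phi u1 u2 >= d/7 ->
  Kset Om d (lpt x0 e1 e2 nu u1 u2 s).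
Proof.
  intros [Ho [Hlip [H00 [Gb Gom]]]] Hd Hn Hg.
  assert (Hq2 : vdist (lpt x0 e1 e2 nu u1 u2 s) x0 < 2 * d) by (apply vdist_lpt0; auto; lra).
  assert (Hin: oball x0 (3*d) (lpt x0 e1 e2 nu u1 u2 s)) by (unfold oball; lra).
  split.
  - apply (proj2 (Gom _ Hin)). exists u1, u2, s. split; auto. lra.
  - intros [_ [b [Hb Hqb]]].
    assert (Hbin: oball x0 (3*d) b).
    { unfold oball. pose proof (vdist_triang b (lpt x0 e1 e2 nu u1 u2 s) x0).
      rewrite vdist_sym in Hqb. lra. }
    destruct (proj1 (Gb b Hbin) Hb) as [v1 [v2 Hbe]]. subst b.
    apply vdist_lpt in Hqb; auto; try lra.
    pose proof (Hlip v1 v2 u1 u2) as Hl.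
    pose proof (pow2_ge_0 (u1 - v1)). pose proof (pow2_ge_0 (u2 - v2)). pose proof (pow2_ge_0 (s - phi v1 v2)).
    assert (A1: Rabs (v1 - u1) < d/8) by (apply sq_lt_abs; [lra|]; replace ((v1 - u1)^2) with ((u1-v1)^2) by ring; lra).
    assert (A2: Rabs (v2 - u2) < d/8) by (apply sq_lt_abs; [lra|]; replace ((v2 - u2)^2) with ((u2-v2)^2) by ring; lra).
    pose proof (Rle_abs (phi v1 v2 - phi u1 u2)).
    assert (s - phi v1 v2 > d/8) by lra.
    assert ((s - phi v1 v2)^2 > d/8*(d/8)) by nra.
    pose proof (pow2_ge_0 (u1 - v1)). pose proof (pow2_ge_0 (u2 - v2)). lra.
Qed.

Lemma Mono Om d x0 e1 e2 nu phi u1 u2 u3 s : ChartOK Om d x0 e1 e2 nu phi -> 0 < d ->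
  Kset Om d (lpt x0 e1 e2 nu u1 u2 u3) -> phi u1 u2 < u3 ->
  u1^2 + u2^2 + u3^2 < (2*d) * (2*d) -> u3 <= s -> u1^2 + u2^2 + s^2 < (2*d) * (2*d) ->
  Kset Om d (lpt x0 e1 e2 nu u1 u2 s).
Proof.
  intros HC Hd Ky Hph Hny Hs Hnq.
  pose proof HC as [Ho [Hlip [H00 [Gb Gom]]]].
  assert (Hq2 : vdist (lpt x0 e1 e2 nu u1 u2 s) x0 < 2 * d) by (apply vdist_lpt0; auto; lra).
  assert (Hin: oball x0 (3*d) (lpt x0 e1 e2 nu u1 u2 s)) by (unfold oball; lra).
  pose proof (pow2_ge_0 u1). pose proof (pow2_ge_0 u2). pose proof (pow2_ge_0 u3). pose proof (pow2_ge_0 s).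
  assert (U1: Rabs u1 < 2*d) by (apply sq_lt_abs; lra).
  assert (U2: Rabs u2 < 2*d) by (apply sq_lt_abs; lra).
  assert (Hpu: Rabs (phi u1 u2) < 4*d/100).
  { pose proof (Hlip u1 u2 0 0) as Hl. rewrite H00, !Rminus_0_r in Hl. lra. }
  assert (Hfin: oball x0 (3*d) (lpt x0 e1 e2 nu u1 u2 (phi u1 u2))).
  { unfold oball. apply vdist_lpt0; auto; try lra. pose proof (abs_lt_sq _ _ Hpu). assert (0 < d * d) by nra. lra. }
  assert (Hfb: bdry Om (lpt x0 e1 e2 nu u1 u2 (phi u1 u2))).
  { apply (proj2 (Gb _ Hfin)). eauto. }
  pose proof (K_far _ _ _ _ Ky Hfb) as Hf.
  assert (Hgap: u3 - phi u1 u2 >= d/8).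
  { destruct (Rlt_or_le (u3 - phi u1 u2) (d/8)); try lra. exfalso.
    assert (vdist (lpt x0 e1 e2 nu u1 u2 u3) (lpt x0 e1 e2 nu u1 u2 (phi u1 u2)) < d/8).
    { apply vdist_lpt; auto; try lra.
      replace ((u1 - u1) ^ 2 + (u2 - u2) ^ 2 + (u3 - phi u1 u2) ^ 2) with ((u3 - phi u1 u2) ^ 2) by ring.
      nra. }
    lra. }
  split.
  - apply (proj2 (Gom _ Hin)). exists u1, u2, s. split; auto. lra.
  - intros [_ [b [Hb Hqb]]].
    assert (Hbin: oball x0 (3*d) b).
    { unfold oball. pose proof (vdist_triang b (lpt x0 e1 e2 nu u1 u2 s) x0).
      rewrite vdist_sym in Hqb. lra. }
    pose proof Hbin as Hbin'.
    destruct (proj1 (Gb b Hbin) Hb) as [v1 [v2 Hbe]]. subst b.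
    unfold oball in Hbin'. apply vdist_lpt0 in Hbin'; auto; try lra.
    pose proof (pow2_ge_0 v1). pose proof (pow2_ge_0 v2). pose proof (pow2_ge_0 (phi v1 v2)).
    assert (V1: Rabs v1 < 3*d) by (apply sq_lt_abs; lra).
    assert (V2: Rabs v2 < 3*d) by (apply sq_lt_abs; lra).
    pose proof (Hlip v1 v2 u1 u2) as Hl.
    pose proof (abs_sub_le v1 u1). pose proof (abs_sub_le v2 u2).
    pose proof (Rle_abs (phi v1 v2 - phi u1 u2)).
    assert (Hpv: phi v1 v2 < u3) by lra.
    pose proof (K_far _ _ _ _ Ky Hb) as Hyb.
    apply vdist_lpt in Hqb; auto; try lra.
    assert (vdist (lpt x0 e1 e2 nu u1 u2 u3) (lpt x0 e1 e2 nu v1 v2 (phi v1 v2)) < d/8).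
    { apply vdist_lpt; auto; try lra. nra. }
    lra.
Qed.

Lemma Hub Om d x0 e1 e2 nu phi y : ChartOK Om d x0 e1 e2 nu phi -> 0 < d ->
  Kset Om d y -> vdist y x0 < d -> path (Kset Om d) y (lpt x0 e1 e2 nu 0 0 d).
Proof.
  intros HC Hd Ky Hy.
  pose proof HC as [Ho [Hlip [H00 [Gb Gom]]]].
  assert (Hin: oball x0 (3*d) y) by (unfold oball; lra).
  destruct (proj1 (Gom y Hin) (proj1 Ky)) as [u1 [u2 [u3 [Hye Hph]]]]. subst y.
  apply vdist_lpt0 in Hy; auto.
  pose proof (pow2_ge_0 u1). pose proof (pow2_ge_0 u2). pose proof (pow2_ge_0 u3).
  assert (U3: Rabs u3 < d) by (apply sq_lt_abs; lra).
  assert (U1: Rabs u1 < d) by (apply sq_lt_abs; lra).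
  assert (U2: Rabs u2 < d) by (apply sq_lt_abs; lra).
  pose proof (Rabs_def2 _ _ U3).
  apply path_trans with (lpt x0 e1 e2 nu u1 u2 d).
  - apply path_seg. intros l Hl.
    replace (seg (lpt x0 e1 e2 nu u1 u2 u3) (lpt x0 e1 e2 nu u1 u2 d) l)
      with (lpt x0 e1 e2 nu u1 u2 (u3 + l * (d - u3))) by (vcomp; f_equal; ring).
    assert (Hs1: u3 <= u3 + l * (d - u3)) by nra.
    assert (Hs2: u3 + l * (d - u3) <= d) by nra.
    assert (Hs3: (u3 + l * (d - u3))^2 <= d * d) by nra.
    apply (Mono Om d x0 e1 e2 nu phi u1 u2 u3); auto; nra.
  - apply path_seg. intros l Hl.
    replace (seg (lpt x0 e1 e2 nu u1 u2 d) (lpt x0 e1 e2 nu 0 0 d) l)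
      with (lpt x0 e1 e2 nu ((1 - l) * u1) ((1 - l) * u2) d) by (vcomp; f_equal; ring).
    apply (GL Om d x0 e1 e2 nu phi); auto; try nra.
    pose proof (Hlip ((1 - l) * u1) ((1 - l) * u2) 0 0) as Hl2.
    rewrite H00, !Rminus_0_r, !Rabs_mult, (Rabs_pos_eq (1 - l)) in Hl2 by lra.
    pose proof (Rle_abs (phi ((1 - l) * u1) ((1 - l) * u2))).
    assert ((1 - l) * Rabs u1 <= d) by nra.
    assert ((1 - l) * Rabs u2 <= d) by nra.
    rewrite Rminus_0_r in Hl2 || idtac. lra.
Qed.


Lemma abs_le_sqrt x y : Rabs x <= sqrt (x ^ 2 + y ^ 2).
Proof.
  rewrite <- (sqrt_pow2 (Rabs x)) by apply Rabs_pos. rewrite pow2_abs.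
  apply sqrt_le_1_alt. pose proof (pow2_ge_0 y). lra.
Qed.

Lemma lip_phi phi : has_partials phi ->
  (forall u1 u2, sqrt (D1 phi u1 u2 ^ 2 + D2 phi u1 u2 ^ 2) < 1 / 100) ->
  forall a1 a2 b1 b2, Rabs (phi a1 a2 - phi b1 b2) <= (Rabs (a1 - b1) + Rabs (a2 - b2)) / 100.
Proof.
  intros Hp Hg a1 a2 b1 b2.
  assert (HD1: forall x y, Rabs (D1 phi x y) <= 1/100).
  { intros x y. pose proof (Hg x y). pose proof (abs_le_sqrt (D1 phi x y) (D2 phi x y)). lra. }
  assert (HD2: forall x y, Rabs (D2 phi x y) <= 1/100).
  { intros x y. pose proof (Hg x y). pose proof (abs_le_sqrt (D2 phi x y) (D1 phi x y)).
    rewrite Rplus_comm in H0. lra. }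
  assert (E1: Rabs (phi a1 a2 - phi b1 a2) <= 1/100 * Rabs (a1 - b1)).
  { apply (bounded_variation (fun t => phi t a2) (fun t => D1 phi t a2)).
    intros t _. split; [|apply HD1]. unfold D1. apply Derive_correct. apply (Hp t a2). }
  assert (E2: Rabs (phi b1 a2 - phi b1 b2) <= 1/100 * Rabs (a2 - b2)).
  { apply (bounded_variation (fun t => phi b1 t) (fun t => D2 phi b1 t)).
    intros t _. split; [|apply HD2]. unfold D2. apply Derive_correct. apply (Hp b1 t). }
  replace (phi a1 a2 - phi b1 b2) with ((phi a1 a2 - phi b1 a2) + (phi b1 a2 - phi b1 b2)) by ring.
  eapply Rle_trans; [apply Rabs_triang|]. lra.
Qed.

Lemma seg_near p q l : 0 <= l <= 1 -> vdist p (seg p q l) <= vdist p q.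
Proof.
  intro Hl. rewrite <- (seg0 p q) at 1. rewrite seg_dist, vdist_sym.
  rewrite Rabs_left1 by lra. pose proof (vdist_pos p q). nra.
Qed.

Lemma open_near (P : vec3 -> Prop) r : open3 (fun w => exists y, P y /\ vdist w y < r).
Proof.
  intros w [y [Py Hwy]]. exists (r - vdist w y). split; [lra|].
  intros z Hz. exists y. split; auto. pose proof (vdist_triang z w y). lra.
Qed.

Lemma LocConn Om d m1 (x0 e1 e2 nu : nat -> vec3) (phi : nat -> R -> R -> R) y y' :
  0 < d -> (forall i, (i < m1)%nat -> ChartOK Om d (x0 i) (e1 i) (e2 i) (nu i) (phi i)) ->
  (forall b, bdry Om b -> exists i, (i < m1)%nat /\ oball (x0 i) (d / 8) b) ->
  Kset Om d y -> Kset Om d y' -> vdist y y' < 2 * (d / 7) -> path (Kset Om d) y y'.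
Proof.
  intros Hd HC Hcov Ky Ky' Hyy.
  destruct (classic (exists b, bdry Om b /\ vdist y b < d/8 + 2*(d/7))) as [[b [Hb Hyb]]|Hno].
  - destruct (Hcov b Hb) as [i [Hi Hbi]]. unfold oball in Hbi.
    pose proof (vdist_triang y b (x0 i)). pose proof (vdist_triang y' y (x0 i)).
    rewrite (vdist_sym y' y) in H0.
    apply path_trans with (lpt (x0 i) (e1 i) (e2 i) (nu i) 0 0 d).
    + apply (Hub Om d (x0 i) (e1 i) (e2 i) (nu i) (phi i)); auto. lra.
    + apply path_sym. apply (Hub Om d (x0 i) (e1 i) (e2 i) (nu i) (phi i)); auto. lra.
  - assert (Hfar: forall b, bdry Om b -> d/8 + 2*(d/7) <= vdist y b).
    { intros b Hb. destruct (Rlt_or_le (vdist y b) (d/8 + 2*(d/7))); auto.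
      exfalso; apply Hno; eauto. }
    apply path_seg. intros l Hl. pose proof (seg_near y y' l Hl) as Hn.
    split.
    + destruct (classic (Om (seg y y' l))) as [Hp|Hp]; auto. exfalso.
      destruct (seg_bdry Om y (seg y y' l) (proj1 Ky) Hp) as [l' [Hl' Hb]].
      pose proof (seg_near y (seg y y' l) l' Hl'). pose proof (Hfar _ Hb). lra.
    + intros [_ [b [Hb Hpb]]]. pose proof (Hfar _ Hb).
      pose proof (vdist_triang y (seg y y' l) b). lra.
Qed.

Theorem lemma2p5 (Om : set3) (delta d : R) :
  open3 Om -> connected3 Om -> bounded3 Om -> C2_boundary Om ->
  is_delta Om delta ->
  0 < d -> d < Rmin 1 delta ->
  path_connected (fun x => Om x /\ ~ near_bdry Om (d / 8) x).
Proof.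
  intros Hopen Hconn Hbd HC2 [Hdpos Hdel] Hd Hdmin.
  destruct (Hdel d Hd Hdmin) as [m1 [x0 [e1 [e2 [nu [phi [Hx0 [Hcov Hch]]]]]]]].
  assert (HC: forall i, (i < m1)%nat -> ChartOK Om d (x0 i) (e1 i) (e2 i) (nu i) (phi i)).
  { intros i Hi. destruct (Hch i Hi) as [Ho [HC2i [H00 [_ [_ [Hgrad [Hgo _]]]]]]].
    split; auto. split; [|split; auto].
    apply lip_phi; auto. exact (proj1 (proj2 (proj1 HC2i))). }
  change (path_connected (Kset Om d)).
  intros x1 x2 H1 H2. change (path (Kset Om d) x1 x2).
  destruct (classic (path (Kset Om d) x1 x2)) as [P|NP]; auto. exfalso. apply Hconn.
  set (S := fun y => path (Kset Om d) x1 y).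
  exists (fun w => exists y, (Kset Om d y /\ S y) /\ vdist w y < d/7),
         (fun w => exists y, (Kset Om d y /\ ~ S y) /\ vdist w y < d/7).
  split; [apply open_near|]. split; [apply open_near|].
  split; [|split; [|split]].
  - intros x Hx. destruct (classic (Kset Om d x)) as [Kx|nK].
    + destruct (classic (S x)); [left|right]; exists x; rewrite vdist_refl; (split; [split; auto| lra]).
    + assert (Hnb: near_bdry Om (d/8) x).
      { destruct (classic (near_bdry Om (d/8) x)); auto. exfalso; apply nK; split; auto. }
      destruct Hnb as [_ [b [Hb Hxb]]].
      destruct (Hcov b Hb) as [i [Hi Hbi]]. unfold oball in Hbi.
      pose proof (vdist_triang x b (x0 i)).
      pose proof (HC i Hi) as HCi. destruct HCi as [Ho [Hlip [H00 [Gb Gom]]]].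
      assert (Hin: oball (x0 i) (3*d) x) by (unfold oball; lra).
      destruct (proj1 (Gom x Hin) Hx) as [u1 [u2 [u3 [Hxe Hph]]]]. subst x.
      assert (Hn: u1^2 + u2^2 + u3^2 < d/4 * (d/4)) by (apply (proj1 (vdist_lpt0 (x0 i) (e1 i) (e2 i) (nu i) u1 u2 u3 (d/4) Ho ltac:(lra))); lra).
      pose proof (pow2_ge_0 u1). pose proof (pow2_ge_0 u2). pose proof (pow2_ge_0 u3).
      assert (U1: Rabs u1 < d/4) by (apply sq_lt_abs; lra).
      assert (U2: Rabs u2 < d/4) by (apply sq_lt_abs; lra).
      assert (Hpu: Rabs (phi i u1 u2) < d/200).
      { pose proof (Hlip u1 u2 0 0) as Hl. rewrite H00, !Rminus_0_r in Hl. lra. }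
      pose proof (Rabs_def2 _ _ Hpu).
      destruct (Rlt_or_le (u3 - phi i u1 u2) (d/7)) as [Hlt|Hge].
      2: { exfalso. apply nK. apply (GL Om d (x0 i) (e1 i) (e2 i) (nu i) (phi i)); auto. nra. lra. }
      assert (Ky: Kset Om d (lpt (x0 i) (e1 i) (e2 i) (nu i) u1 u2 (phi i u1 u2 + d/7))).
      { apply (GL Om d (x0 i) (e1 i) (e2 i) (nu i) (phi i)); auto. nra. lra. }
      assert (Hxy: vdist (lpt (x0 i) (e1 i) (e2 i) (nu i) u1 u2 u3)
                         (lpt (x0 i) (e1 i) (e2 i) (nu i) u1 u2 (phi i u1 u2 + d/7)) < d/7).
      { apply vdist_lpt; auto; try lra.
        replace ((u1 - u1) ^ 2 + (u2 - u2) ^ 2 + (u3 - (phi i u1 u2 + d / 7)) ^ 2)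
          with ((u3 - (phi i u1 u2 + d / 7)) ^ 2) by ring. nra. }
      destruct (classic (S (lpt (x0 i) (e1 i) (e2 i) (nu i) u1 u2 (phi i u1 u2 + d/7)))); [left|right];
        (eexists; split; [split; eauto| exact Hxy]).
  - exists x1. split; [exact (proj1 H1)|]. exists x1. rewrite vdist_refl.
    split; [split; [auto| apply path_refl; auto]| lra].
  - exists x2. split; [exact (proj1 H2)|]. exists x2. rewrite vdist_refl.
    split; [split; auto| lra].
  - intros w Hw [y [[Ky Sy] Hwy]] [y' [[Ky' nSy'] Hwy']]. apply nSy'.
    unfold S. apply path_trans with y; auto.
    apply (LocConn Om d m1 x0 e1 e2 nu phi); auto.
    pose proof (vdist_triang y w y'). rewrite (vdist_sym y w) in H. lra.
Qed.
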